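(* Let $A$ be a finite nonempty set of actions and $\boldsymbol{v}^0,\boldsymbol{v}^1,\dots\in\mathbb{R}^{|A|}$ an arbitrary sequence of value vectors. Let $\boldsymbol{s}^t$ denote either the regret-matching stored values $\boldsymbol{r}^t$ or the regret-matching$^+$ stored values $\boldsymbol{q}^t$, and $\boldsymbol{\sigma}^t$ the associated policy. Then for every $t$ such that $s^t_a>0$ for some $a\in A$, there exists $b\in A$ with $s^{t+1}_b>0$.
   Context: For $x\in\mathbb{R}$, $x^+:=\max(x,0)$, applied componentwise to vectors. Define $\boldsymbol{\sigma}_{\mathrm{rm}}(\boldsymbol{x}):=\boldsymbol{x}^+/(\boldsymbol{1}\cdot\boldsymbol{x}^+)$ if some $x_a>0$, and $\boldsymbol{1}/|A|$ otherwise. Regret-matching: $\boldsymbol{r}^0=\boldsymbol{0}$, $\boldsymbol{\sigma}^t=\boldsymbol{\sigma}_{\mathrm{rm}}(\boldsymbol{r}^t)$, $\boldsymbol{r}^{t+1}=\boldsymbol{r}^t+\boldsymbol{v}^t-(\boldsymbol{\sigma}^t\cdot\boldsymbol{v}^t)\boldsymbol{1}$. Regret-matching$^+$: $\boldsymbol{q}^0=\boldsymbol{0}$, $\boldsymbol{\sigma}^t=\boldsymbol{\sigma}_{\mathrm{rm}}(\boldsymbol{q}^t)$, $\boldsymbol{q}^{t+1}=\bigl(\boldsymbol{q}^t+\boldsymbol{v}^t-(\boldsymbol{\sigma}^t\cdot\boldsymbol{v}^t)\boldsymbol{1}\bigr)^+$. *)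

(* Defs.v *)
From mathcomp Require Import all_boot all_order all_algebra.
Set Implicit Arguments. Unset Strict Implicit. Unset Printing Implicit Defensive.
Import Order.TTheory GRing.Theory Num.Theory.
Local Open Scope ring_scope.

Section RM.
Variables (R : realFieldType) (A : finType).

Definition pospart (x : {ffun A -> R}) : {ffun A -> R} :=
  [ffun a => Num.max (x a) 0].

Definition sigma_rm (x : {ffun A -> R}) : {ffun A -> R} :=
  if [exists a, 0 < x a]
  then [ffun a => pospart x a / (\sum_(b : A) pospart x b)]
  else [ffun a => (#|A|%:R)^-1].

Definition dotp (x y : {ffun A -> R}) : R := \sum_(a : A) x a * y a.

Definition regret_step (s v : {ffun A -> R}) : {ffun A -> R} :=
  [ffun a => s a + v a - dotp (sigma_rm s) v].

Fixpoint rm_r (v : nat -> {ffun A -> R}) (t : nat) : {ffun A -> R} :=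
  match t with
  | 0 => [ffun => 0]
  | t'.+1 => regret_step (rm_r v t') (v t')
  end.

Fixpoint rmp_q (v : nat -> {ffun A -> R}) (t : nat) : {ffun A -> R} :=
  match t with
  | 0 => [ffun => 0]
  | t'.+1 => pospart (regret_step (rmp_q v t') (v t'))
  end.

End RM.

(* Main.v *)
Require Import Defs.
From mathcomp Require Import all_boot all_order all_algebra.
Import Order.TTheory GRing.Theory Num.Theory.
Local Open Scope ring_scope.

Lemma step_pos (R : realFieldType) (A : finType) (s w : {ffun A -> R}) :
  (exists a : A, 0 < s a) -> exists b : A, 0 < regret_step s w b.
Proof.
move=> [a Ha].
have Hex : [exists a, 0 < s a] by apply/existsP; exists a.
set P := fun b => pospart s b.
have P0 : forall b, 0 <= P b by move=> b; rewrite /P /pospart ffunE le_max lexx orbT.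
have Ps : forall b, 0 <= P b * s b.
  move=> b; rewrite /P /pospart ffunE.
  case: (leP (s b) 0) => h.
    by rewrite mul0r.
  by rewrite mulr_ge0 // ltW.
have PaS : 0 < P a by rewrite /P /pospart ffunE lt_max Ha.
set S := \sum_b P b.
have S0 : 0 < S.
  rewrite /S (bigD1 a) //=; apply: lt_le_trans PaS _.
  by rewrite lerDl; apply: sumr_ge0.
have Hd : dotp (sigma_rm s) w = (\sum_b P b * w b) / S.
  rewrite /dotp /sigma_rm Hex mulr_suml; apply: eq_bigr => b _.
  by rewrite ffunE /P mulrAC.
have key : \sum_b P b * regret_step s w b = \sum_b P b * s b.
  under eq_bigr => b _ do rewrite ffunE mulrBr mulrDr.
  rewrite sumrB big_split /= -mulr_suml Hd -/S mulrC mulfVK ?addrK //.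
  by rewrite gt_eqF.
have pos : 0 < \sum_b P b * s b.
  rewrite (bigD1 a) //=; apply: lt_le_trans (mulr_gt0 PaS Ha) _.
  by rewrite lerDl; apply: sumr_ge0.
case: (boolP [exists b, 0 < regret_step s w b]) => [/existsP//|]; rewrite negb_exists => /forallP H.
have : \sum_b P b * regret_step s w b <= 0.
  apply: sumr_le0 => b _; apply: mulr_ge0_le0 => //.
  by rewrite leNgt; apply: H.
by rewrite key leNgt pos.
Qed.

Theorem lemma1 (R : realFieldType) (A : finType) (hA : (0 < #|A|)%N)
    (v : nat -> {ffun A -> R}) (t : nat) :
  ((exists a : A, 0 < rm_r v t a) -> exists b : A, 0 < rm_r v t.+1 b) /\
  ((exists a : A, 0 < rmp_q v t a) -> exists b : A, 0 < rmp_q v t.+1 b).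
Proof.
split=> H; have [b Hb] := @step_pos R A _ (v t) H; exists b => //=.
by rewrite /pospart ffunE lt_max Hb.
Qed.
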